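(* If $A$ is a profinite algebra which is left semiartinian and left selfinjective, then $A$ is a finite dimensional quasi-Frobenius algebra.
   Context: A profinite algebra is an algebra over a field which is an inverse limit of finite dimensional algebras (equivalently, the dual algebra $C^*$ of a coalgebra $C$). A ring is left semiartinian if every nonzero left module (equivalently every nonzero quotient of the ring as left module) has a nonzero socle. A ring is quasi-Frobenius if it is left (equivalently right) selfinjective and left (equivalently right) artinian. *)

(* Defs.v *)
From HB Require Import structures.
From mathcomp Require Import all_boot all_algebra.
From mathcomp Require Import falgebra.
Set Implicit Arguments. Unset Strict Implicit. Unset Printing Implicit Defensive.
Import GRing.Theory.
Local Open Scope ring_scope.

Definition submodule (R : pzRingType) (M : lmodType R) (S : M -> Prop) : Prop :=
  S 0 /\ forall (a : R) (u v : M), S u -> S v -> S (a *: u + v).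

Definition simple_submodule (R : pzRingType) (M : lmodType R) (S : M -> Prop) : Prop :=
  submodule S /\ (exists m, S m /\ m <> 0) /\
  forall T : M -> Prop, submodule T -> (forall m, T m -> S m) ->
    (forall m, T m -> m = 0) \/ (forall m, S m -> T m).

Definition nonzero_socle (R : pzRingType) (M : lmodType R) : Prop :=
  exists S : M -> Prop, simple_submodule S.

Definition left_semiartinian (R : pzRingType) : Prop :=
  forall M : lmodType R, (exists m : M, m <> 0) -> nonzero_socle M.

Definition injective_module (R : pzRingType) (E : lmodType R) : Prop :=
  forall (M N : lmodType R) (f : M -> N) (g : M -> E),
    linear f -> injective f -> linear g ->
    exists h : N -> E, linear h /\ forall m, h (f m) = g m.

Definition left_selfinjective (R : pzRingType) : Prop :=
  injective_module (R^o : lmodType R).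

Definition left_ideal (R : pzRingType) (I : R -> Prop) : Prop :=
  submodule (I : R^o -> Prop).

Definition left_artinian (R : pzRingType) : Prop :=
  forall I : nat -> R -> Prop,
    (forall n, left_ideal (I n)) ->
    (forall n x, I n.+1 x -> I n x) ->
    exists N, forall n, (N <= n)%N -> forall x, I n x <-> I N x.

Definition quasi_Frobenius (R : pzRingType) : Prop :=
  left_selfinjective R /\ left_artinian R.

Definition finite_dimensional (K : fieldType) (V : lmodType K) : Prop :=
  exists s : seq V, forall v : V,
    exists c : nat -> K, v = \sum_(i < size s) c i *: s`_i.

Definition alg_morph (K : fieldType) (U V : lalgType K) (g : U -> V) : Prop :=
  (forall (a : K) (x y : U), g (a *: x + y) = a *: g x + g y) /\
  g 1 = 1 /\ forall x y, g (x * y) = g x * g y.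

(* A is profinite: A is (isomorphic, via the canonical projections p_i, to)
   the inverse limit of an inverse system of finite dimensional K-algebras
   indexed by a directed preordered set. *)
Definition profinite_algebra (K : fieldType) (A : algType K) : Prop :=
  exists (I : Type) (le : I -> I -> Prop) (B : I -> falgType K)
         (f : forall i j, le i j -> B j -> B i) (p : forall i, A -> B i),
    inhabited I /\
    ((forall i, le i i) /\ (forall i j k, le i j -> le j k -> le i k)) /\
    (forall i j, exists k, le i k /\ le j k) /\
    (forall i j (h : le i j), alg_morph (f i j h)) /\
    (forall i (h : le i i) (x : B i), f i i h x = x) /\
    (forall i j k (hij : le i j) (hjk : le j k) (hik : le i k) (x : B k),
        f i j hij (f j k hjk x) = f i k hik x) /\
    (forall i, alg_morph (p i)) /\
    (forall i j (h : le i j) (a : A), f i j h (p j a) = p i a) /\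
    (forall a : A, (forall i, p i a = 0) -> a = 0) /\
    (forall x : forall i, B i,
       (forall i j (h : le i j), f i j h (x j) = x i) ->
       exists a : A, forall i, p i a = x i).

(* Main.v *)
Require Import Defs.
From HB Require Import structures.
From mathcomp Require Import all_boot all_algebra.
From mathcomp Require Import falgebra.
From mathcomp Require Import boolp zify.
From Stdlib Require Import ClassicalEpsilon.
Set Warnings "-all".
Set Implicit Arguments. Unset Strict Implicit. Unset Printing Implicit Defensive.
Import GRing.Theory.
Local Open Scope ring_scope.

Section SubMod.
Variables (R : pzRingType) (M : lmodType R) (P : M -> Prop) (hP : submodule P).
Definition subm := {x : M | P x}.
HB.instance Definition _ := gen_eqMixin subm.
HB.instance Definition _ := gen_choiceMixin subm.
Lemma subm_comb a (x y : M) : P x -> P y -> P (a *: x + y).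
Proof. by move=> Hx Hy; apply: (proj2 hP). Qed.
Lemma subm0 : P 0. Proof. exact: (proj1 hP). Qed.
Lemma submD (x y : M) : P x -> P y -> P (x + y).
Proof. by move=> Hx Hy; have := subm_comb 1 Hx Hy; rewrite scale1r. Qed.
Lemma submN (x : M) : P x -> P (- x).
Proof. by move=> Hx; have := subm_comb (-1) Hx subm0; rewrite addr0 scaleN1r. Qed.
Lemma submZ a (x : M) : P x -> P (a *: x).
Proof. by move=> Hx; have := subm_comb a Hx subm0; rewrite addr0. Qed.
Definition subm_zero : subm := exist _ 0 subm0.
Definition subm_add (x y : subm) : subm := exist _ (proj1_sig x + proj1_sig y) (submD (proj2_sig x) (proj2_sig y)).
Definition subm_opp (x : subm) : subm := exist _ (- proj1_sig x) (submN (proj2_sig x)).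
Definition subm_scale a (x : subm) : subm := exist _ (a *: proj1_sig x) (submZ a (proj2_sig x)).
Lemma subm_eq (x y : subm) : proj1_sig x = proj1_sig y -> x = y.
Proof. case: x => x px; case: y => y py /= exy; subst y. by rewrite (Prop_irrelevance px py). Qed.
Lemma subm_addA : associative subm_add.
Proof. by move=> x y z; apply: subm_eq; rewrite /= addrA. Qed.
Lemma subm_addC : commutative subm_add.
Proof. by move=> x y; apply: subm_eq; rewrite /= addrC. Qed.
Lemma subm_add0 : left_id subm_zero subm_add.
Proof. by move=> x; apply: subm_eq; rewrite /= add0r. Qed.
Lemma subm_addN : left_inverse subm_zero subm_opp subm_add.
Proof. by move=> x; apply: subm_eq; rewrite /= addNr. Qed.
HB.instance Definition _ := GRing.isZmodule.Build subm subm_addA subm_addC subm_add0 subm_addN.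
Lemma subm_scaleA a b v : subm_scale a (subm_scale b v) = subm_scale (a * b) v.
Proof. by apply: subm_eq; rewrite /= scalerA. Qed.
Lemma subm_scale1 : left_id 1 subm_scale.
Proof. by move=> x; apply: subm_eq; rewrite /= scale1r. Qed.
Lemma subm_scaleDr : right_distributive subm_scale +%R.
Proof. by move=> a x y; apply: subm_eq; rewrite /= scalerDr. Qed.
Lemma subm_scaleDl v : {morph subm_scale^~ v: a b / a + b}.
Proof. by move=> a b; apply: subm_eq; rewrite /= scalerDl. Qed.
HB.instance Definition _ := GRing.Zmodule_isLmodule.Build R subm subm_scaleA subm_scale1 subm_scaleDr subm_scaleDl.
Definition submT : lmodType R := subm.
Lemma subm_valD (x y : submT) : proj1_sig (x + y) = proj1_sig x + proj1_sig y. Proof. by []. Qed.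
Lemma subm_valZ a (x : submT) : proj1_sig (a *: x) = a *: proj1_sig x. Proof. by []. Qed.
Lemma subm_val0 : proj1_sig (0 : submT) = 0. Proof. by []. Qed.
End SubMod.


Section QuotMod.
Variables (R : pzRingType) (M : lmodType R) (Q : M -> Prop) (hQ : submodule Q).
Let Q0 : Q 0. Proof. exact: (proj1 hQ). Qed.
Let QD (x y : M) : Q x -> Q y -> Q (x + y).
Proof. by move=> Hx Hy; have := (proj2 hQ) 1 _ _ Hx Hy; rewrite scale1r. Qed.
Let QN (x : M) : Q x -> Q (- x).
Proof. by move=> Hx; have := (proj2 hQ) (-1) _ _ Hx Q0; rewrite addr0 scaleN1r. Qed.
Let QZ a (x : M) : Q x -> Q (a *: x).
Proof. by move=> Hx; have := (proj2 hQ) a _ _ Hx Q0; rewrite addr0. Qed.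

Definition quo := {C : M -> Prop | exists a, C = fun b => Q (b - a)}.
HB.instance Definition _ := gen_eqMixin quo.
HB.instance Definition _ := gen_choiceMixin quo.
Definition qpi (a : M) : quo := exist _ (fun b => Q (b - a)) (ex_intro _ a erefl).
Definition qrep (C : quo) : M := epsilon (inhabits 0) (fun a => proj1_sig C = fun b => Q (b - a)).
Lemma qpiK C : qpi (qrep C) = C.
Proof.
case: C => C HC; rewrite /qrep /=.
have := epsilon_spec (inhabits 0) (fun a => C = fun b => Q (b - a)) HC.
set e := epsilon _ _ => He.
rewrite /qpi; move: (ex_intro _ e _) => H2; move: HC H2; rewrite He => HC H2.
by rewrite (Prop_irrelevance H2 HC).
Qed.
Lemma qpi_eq a b : qpi a = qpi b <-> Q (a - b).
Proof.
split.
- move=> /(congr1 (@proj1_sig _ _)) /= E.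
  by move: E => /(congr1 (fun f => f a)) /= <-; rewrite subrr.
- move=> H; rewrite /qpi.
  have E : (fun c => Q (c - a)) = (fun c => Q (c - b)).
    apply: funext => c; apply: propext; split => Hc.
      by have := QD Hc H; rewrite addrA subrK.
    by have := QD Hc (QN H); rewrite opprB addrA subrK.
  move: (ex_intro _ a _) (ex_intro _ b _); rewrite E => H1 H2.
  by rewrite (Prop_irrelevance H1 H2).
Qed.
Lemma qrepP a : Q (qrep (qpi a) - a).
Proof. by apply/qpi_eq; rewrite qpiK. Qed.
Lemma qpi_surj C : exists a, C = qpi a.
Proof. by exists (qrep C); rewrite qpiK. Qed.

Definition q_zero : quo := qpi 0.
Definition q_add (C D : quo) : quo := qpi (qrep C + qrep D).
Definition q_opp (C : quo) : quo := qpi (- qrep C).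
Definition q_scale a (C : quo) : quo := qpi (a *: qrep C).
Lemma q_addE a b : q_add (qpi a) (qpi b) = qpi (a + b).
Proof.
apply/qpi_eq; have := QD (qrepP a) (qrepP b).
by rewrite opprD addrACA.
Qed.
Lemma q_oppE a : q_opp (qpi a) = qpi (- a).
Proof. by apply/qpi_eq; have := QN (qrepP a); rewrite opprB opprK addrC. Qed.
Lemma q_scaleE c a : q_scale c (qpi a) = qpi (c *: a).
Proof. by apply/qpi_eq; have := QZ c (qrepP a); rewrite scalerBr. Qed.
Lemma q_addA : associative q_add.
Proof.
move=> x y z; case: (qpi_surj x) => a ->; case: (qpi_surj y) => b ->; case: (qpi_surj z) => c ->.
by rewrite !q_addE addrA.
Qed.
Lemma q_addC : commutative q_add.
Proof. by move=> x y; case: (qpi_surj x) => a ->; case: (qpi_surj y) => b ->; rewrite !q_addE addrC. Qed.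
Lemma q_add0 : left_id q_zero q_add.
Proof. by move=> x; case: (qpi_surj x) => a ->; rewrite /q_zero q_addE add0r. Qed.
Lemma q_addN : left_inverse q_zero q_opp q_add.
Proof. by move=> x; case: (qpi_surj x) => a ->; rewrite q_oppE q_addE addNr. Qed.
HB.instance Definition _ := GRing.isZmodule.Build quo q_addA q_addC q_add0 q_addN.
Lemma q_scaleA a b v : q_scale a (q_scale b v) = q_scale (a * b) v.
Proof. by case: (qpi_surj v) => c ->; rewrite !q_scaleE scalerA. Qed.
Lemma q_scale1 : left_id 1 q_scale.
Proof. by move=> v; case: (qpi_surj v) => c ->; rewrite !q_scaleE scale1r. Qed.
Lemma q_scaleDr : right_distributive q_scale +%R.
Proof.
move=> a x y; case: (qpi_surj x) => c ->; case: (qpi_surj y) => d ->.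
change (q_scale a (q_add (qpi c) (qpi d)) = q_add (q_scale a (qpi c)) (q_scale a (qpi d))).
rewrite q_addE. rewrite !q_scaleE. rewrite q_addE. by rewrite scalerDr.
Qed.
Lemma q_scaleDl v : {morph q_scale^~ v: a b / a + b}.
Proof. move=> a b; case: (qpi_surj v) => c ->.
change (q_scale (a + b) (qpi c) = q_add (q_scale a (qpi c)) (q_scale b (qpi c))).
by rewrite !q_scaleE q_addE scalerDl. Qed.
HB.instance Definition _ := GRing.Zmodule_isLmodule.Build R quo q_scaleA q_scale1 q_scaleDr q_scaleDl.
Definition quoT : lmodType R := quo.
Definition qpiT (a : M) : quoT := qpi a.
Lemma qpiT_add a b : qpiT a + qpiT b = qpiT (a + b). Proof. exact: q_addE. Qed.
Lemma qpiT_scale c a : c *: qpiT a = qpiT (c *: a). Proof. exact: q_scaleE. Qed.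
Lemma qpiT_eq a b : qpiT a = qpiT b <-> Q (a - b). Proof. exact: qpi_eq. Qed.
Lemma qpiT_zero : (0 : quoT) = qpiT 0. Proof. by []. Qed.
Lemma qpiT_surj (C : quoT) : exists a, C = qpiT a. Proof. exact: qpi_surj. Qed.
End QuotMod.


Definition lideal (R : pzRingType) (P : R -> Prop) :=
  P 0 /\ forall a u v, P u -> P v -> P (a * u + v).

Lemma lideal_sub (R : pzRingType) (P : R -> Prop) : lideal P -> submodule (P : R^o -> Prop).
Proof. by []. Qed.

Lemma lin0 (R : pzRingType) (M N : lmodType R) (h : M -> N) : linear h -> h 0 = 0.
Proof.
move=> hl; have := hl 1 0 0; rewrite !scale1r addr0 => E.
by apply: (@addrI _ (h 0)); rewrite addr0 -E.
Qed.

Lemma baer (R : pzRingType) (W : R -> Prop) (phi : R -> R) :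
  left_selfinjective R -> lideal W ->
  (forall b u v, W u -> W v -> phi (b * u + v) = b * phi u + phi v) ->
  exists y, forall w, W w -> phi w = w * y.
Proof.
move=> inj hW hphi.
pose M := submT (lideal_sub hW).
pose f : M -> R^o := fun x => proj1_sig x.
pose g : M -> R^o := fun x => phi (proj1_sig x).
have lf : linear f by [].
have injf : injective f.
  move=> x y /= E; exact: subm_eq E.
have lg : linear g.
  move=> a x y; rewrite /g /=; exact: hphi (proj2_sig x) (proj2_sig y).
have [h [lh hh]] := inj M R^o f g lf injf lg.
exists (h 1) => w Ww.
have := hh (exist _ w Ww); rewrite /f /g /= => <-.
have := lh w 1 0; rewrite (lin0 lh) !addr0 => E.
by rewrite -[w in h w]mulr1; exact: E.
Qed.


Definition simple_li (R : pzRingType) (S : R -> Prop) :=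
  lideal S /\ (exists s, S s /\ s <> 0) /\
  forall T, lideal T -> (forall x, T x -> S x) ->
    (forall x, T x -> x = 0) \/ (forall x, S x -> T x).

Lemma semiart_simple (R : pzRingType) (W : R -> Prop) :
  left_semiartinian R -> lideal W -> (exists w, W w /\ w <> 0) ->
  exists S, simple_li S /\ forall x, S x -> W x.
Proof.
move=> hsa hW [w [Ww wn0]].
pose M := submT (lideal_sub hW).
have [ST [[ST0 STc] [[m [STm mn0]] STs]]] : nonzero_socle M.
  apply: hsa; exists (exist _ w Ww : M) => E.
  by apply: wn0; move: (congr1 (@proj1_sig _ _) E).
exists (fun a => exists t : M, ST t /\ proj1_sig t = a); split; last first.
  by move=> x [t [_ <-]]; exact: (proj2_sig t).
split; [split|split].
- by exists 0; split.
- move=> a u v [t1 [h1 <-]] [t2 [h2 <-]]; exists (a *: t1 + t2); split => //.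
  exact: STc.
- exists (proj1_sig m); split; first by exists m.
  by move=> E; apply: mn0; apply: subm_eq.
move=> T [T0 Tc] TS.
have sT' : submodule (fun t : M => T (proj1_sig t)).
  by split => // a u v; apply: Tc.
have sub' : forall t : M, T (proj1_sig t) -> ST t.
  move=> t /TS [t' [ht' E]]; by rewrite -(subm_eq E).
case: (STs _ sT' sub') => [H0|H1]; [left|right].
- move=> x Tx; have [t [_ Et]] := TS x Tx.
  rewrite -Et; have -> : t = 0 by apply: H0; rewrite Et.
  by [].
- by move=> x [t [STt <-]]; apply: H1.
Qed.


Section SA.
Variables (R : pzRingType) (S : R -> Prop).
Hypothesis hS : simple_li S.

Lemma S0 : S 0. Proof. by case: hS => [[]]. Qed.
Lemma Sc a u v : S u -> S v -> S (a * u + v). Proof. by case: hS => [[_ H] _]; apply: H. Qed.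
Lemma SD u v : S u -> S v -> S (u + v). Proof. by move=> hu hv; have := Sc 1 hu hv; rewrite mul1r. Qed.
Lemma SM a u : S u -> S (a * u). Proof. by move=> hu; have := Sc a hu S0; rewrite addr0. Qed.
Lemma SN u : S u -> S (- u). Proof. by move=> hu; have := SM (-1) hu; rewrite mulN1r. Qed.

Fixpoint U (l : seq R) (v : R) : Prop :=
  match l with
  | [::] => v = 0
  | a :: l' => exists s u, S s /\ U l' u /\ v = s * a + u
  end.

Lemma U_lideal l : lideal (U l).
Proof.
elim: l => [|a l [IH0 IHc]] /=.
  by split=> // b u v -> ->; rewrite mulr0 addr0.
split; first by exists 0, 0; split; [exact: S0| split => //; rewrite mul0r addr0].
move=> b u v [s1 [u1 [hs1 [hu1 ->]]]] [s2 [u2 [hs2 [hu2 ->]]]].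
exists (b * s1 + s2), (b * u1 + u2); split; first exact: Sc.
split; first exact: IHc.
by rewrite mulrDr mulrA mulrDl addrACA.
Qed.

Lemma U_claim l : forall W, lideal W -> (forall w, W w -> U l w) -> (exists w, W w /\ w <> 0) ->
  exists phi : R -> R,
    (forall b u v, W u -> W v -> phi (b * u + v) = b * phi u + phi v) /\
    (forall w, W w -> S (phi w)) /\ exists w, W w /\ phi w <> 0.
Proof.
elim: l => [|a l IH] W hW WU [w0 [Ww0 w0n]].
  by exfalso; apply: w0n; exact: (WU _ Ww0).
have [Ul0 Ulc] := U_lideal l.
have UlD : forall u v, U l u -> U l v -> U l (u + v).
  by move=> u v hu hv; have := Ulc 1 _ _ hu hv; rewrite mul1r.
case: (classic (exists s0, S s0 /\ ~ U l (s0 * a))); last first.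
  move=> hno.
  have hall : forall s, S s -> U l (s * a).
    move=> s hs; apply: NNPP => hn; apply: hno; by exists s.
  apply: IH => //; last by exists w0.
  move=> w /WU [s [u [hs [hu ->]]]]; apply: UlD => //; exact: hall.
move=> [s0 [hs0 hns0]].
have huniq : forall s, S s -> U l (s * a) -> s = 0.
  have hT : lideal (fun s => S s /\ U l (s * a)).
    split; first by split; [exact: S0 | rewrite mul0r].
    move=> b u v [hu1 hu2] [hv1 hv2]; split; first exact: Sc.
    by rewrite mulrDl -mulrA; apply: Ulc.
  case: hS => _ [_ hsimp].
  case: (hsimp _ hT (fun x hx => proj1 hx)) => [H0|H1].
    by move=> s hs hsa; apply: H0.
  by exfalso; apply: hns0; exact: (proj2 (H1 _ hs0)).
pose P w := fun s => S s /\ exists u, U l u /\ w = s * a + u.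
pose phi w := epsilon (inhabits 0) (P w).
have spec : forall w, (exists s, P w s) -> P w (phi w).
  by move=> w hw; apply: epsilon_spec.
have det : forall w s u, S s -> U l u -> w = s * a + u -> phi w = s.
  move=> w s u hs hu E.
  have [hs' [u' [hu' E']]] := spec w (ex_intro _ s (conj hs (ex_intro _ u (conj hu E)))).
  have : s - phi w = 0.
    apply: huniq; first by apply: SD => //; exact: SN.
    have -> : (s - phi w) * a = (-1) * u + u'.
      have E2 : s * a + u = phi w * a + u' by rewrite -E -E'.
      rewrite mulrBl mulN1r -(addrK u (s * a)) E2.
      by rewrite addrAC [phi w * a + _]addrC addrK addrC.
    exact: Ulc.
  by move/eqP; rewrite subr_eq0 => /eqP ->.
have decomp : forall w, W w -> P w (phi w).
  by move=> w /WU [s [u [hs [hu E]]]]; apply: spec; exists s; split => //; exists u.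
case: (classic (exists w, W w /\ phi w <> 0)) => [hex|hno].
  exists phi; split; last by split => //; move=> w /decomp [].
  move=> b u v Wu Wv.
  have [hs1 [u1 [hu1 E1]]] := decomp u Wu.
  have [hs2 [u2 [hu2 E2]]] := decomp v Wv.
  apply: (det _ _ (b * u1 + u2)); first by apply: Sc.
    exact: Ulc.
  by rewrite {1}E1 {1}E2 mulrDl mulrDr mulrA addrACA.
apply: IH => //; last by exists w0.
move=> w Ww; have [_ [u [hu E]]] := decomp w Ww.
have : phi w = 0 by apply: NNPP => hn; apply: hno; exists w.
by move=> h0; rewrite E h0 mul0r add0r.
Qed.

Definition SAid (x : R) := exists l : seq (R * R),
  (forall q, List.In q l -> S q.1) /\ x = \sum_(q <- l) q.1 * q.2.

Lemma SAid_U x : SAid x -> exists l, U l x.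
Proof.
move=> [l [hl ->]]; exists (map snd l).
elim: l hl => [|q l IH] hl /=; first by rewrite big_nil.
exists q.1, (\sum_(q <- l) q.1 * q.2); split; first by apply: hl; left.
split; first by apply: IH => q' hq'; apply: hl; right.
by rewrite big_cons.
Qed.

Lemma SA_disjoint (J' : R -> Prop) : left_selfinjective R ->
  (forall b x, J' x -> J' (b * x)) -> (forall b x, J' x -> J' (x * b)) ->
  (forall s, S s -> J' s -> s = 0) -> forall x, SAid x -> J' x -> x = 0.
Proof.
move=> hinj JL JR SJ x hx Jx; apply: NNPP => xn0.
have [l Ux] := SAid_U hx.
have [Ul0 Ulc] := U_lideal l.
pose W w := exists b, w = b * x.
have hW : lideal W.
  split; first by exists 0; rewrite mul0r.
  by move=> b u v [c ->] [d ->]; exists (b * c + d); rewrite mulrDl mulrA.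
have WU : forall w, W w -> U l w.
  by move=> w [b ->]; have := Ulc b _ _ Ux Ul0; rewrite addr0.
have [phi [hlin [hSphi [w [Ww phin]]]]] := U_claim hW WU (ex_intro _ x (conj (ex_intro _ 1 (esym (mul1r x))) xn0)).
have [y hy] := baer hinj hW hlin.
apply: phin; apply: SJ; first exact: hSphi.
rewrite hy //; apply: JR; case: Ww => b ->; exact: JL.
Qed.
End SA.


Section QP.
Variables (R : pzRingType) (H : nat -> R -> Prop).
Hypothesis hinj : left_selfinjective R.
Hypothesis hsa : left_semiartinian R.
Hypothesis Hl : forall n, lideal (H n).
Hypothesis Hr : forall n b x, H n x -> H n (x * b).
Hypothesis Hnz : forall n, exists x, H n x /\ x <> 0.
Hypothesis Hind : forall N (h : nat -> R), (forall n, H n (h n)) ->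
  \sum_(n < N) h n = 0 -> forall n, (n < N)%N -> h n = 0.

Lemma H0 n : H n 0. Proof. by case: (Hl n). Qed.
Lemma Hc n a u v : H n u -> H n v -> H n (a * u + v). Proof. by case: (Hl n) => _; apply. Qed.
Lemma HD n u v : H n u -> H n v -> H n (u + v).
Proof. by move=> hu hv; have := Hc 1 hu hv; rewrite mul1r. Qed.
Lemma HM n a u : H n u -> H n (a * u).
Proof. by move=> hu; have := Hc a hu (H0 n); rewrite addr0. Qed.

Lemma HN n u : H n u -> H n (- u).
Proof. by move=> hu; have := HM (-1) hu; rewrite mulN1r. Qed.
Lemma Hif n (b : bool) (x : R) : H n x -> H n (if b then x else 0).
Proof. by case: b => // _; exact: H0. Qed.

Lemma pad N1 N (h : nat -> R) : (N1 <= N)%N ->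
  \sum_(n < N) (if (n < N1)%N then h n else 0) = \sum_(n < N1) h n.
Proof. by move=> hN; rewrite (big_ord_widen N h hN) [RHS]big_mkcond. Qed.

Definition HX (X : nat -> Prop) (x : R) := exists N (h : nat -> R),
  (forall n, H n (h n)) /\ (forall n, ~ X n -> h n = 0) /\ x = \sum_(n < N) h n.

Lemma HX_lideal X : lideal (HX X).
Proof.
split.
  exists 0%N, (fun _ => 0); split; first by move=> n; exact: H0.
  by split => //; rewrite big_ord0.
move=> b u v [N1 [h1 [H1 [Z1 ->]]]] [N2 [h2 [H2 [Z2 ->]]]].
pose N := maxn N1 N2.
exists N, (fun n => b * (if (n < N1)%N then h1 n else 0) + (if (n < N2)%N then h2 n else 0)).
split.
  move=> n; apply: Hc; first by case: ifP => _ //; exact: H0.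
  by case: ifP => _ //; exact: H0.
split.
  by move=> n hn; rewrite Z1 // Z2 // !if_same mulr0 addr0.
rewrite big_split /= -mulr_sumr pad ?leq_maxl // pad ?leq_maxr //.
Qed.

Lemma HXD X u v : HX X u -> HX X v -> HX X (u + v).
Proof. by move=> hu hv; have := (proj2 (HX_lideal X)) 1 _ _ hu hv; rewrite mul1r. Qed.
Lemma HXM X a u : HX X u -> HX X (a * u).
Proof. by move=> hu; have := (proj2 (HX_lideal X)) a _ _ hu (proj1 (HX_lideal X)); rewrite addr0. Qed.
Lemma HXN X u : HX X u -> HX X (- u).
Proof. by move=> hu; have := HXM (-1) hu; rewrite mulN1r. Qed.

Lemma HX_single X n h : X n -> H n h -> HX X h.
Proof.
move=> Xn Hh; exists n.+1, (fun m => if m == n then h else 0); split.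
  by move=> m; case: eqP => [->|_] //; exact: H0.
split; first by move=> m hm; case: eqP => // E; subst m.
rewrite big_ord_recr /= eqxx big1 ?add0r // => i _.
by rewrite (ltn_eqF (ltn_ord i)).
Qed.

Lemma HX_disj X x : HX X x -> HX (fun n => ~ X n) x -> x = 0.
Proof.
move=> [N1 [h1 [H1 [Z1 ->]]]] [N2 [h2 [H2 [Z2 E]]]].
pose N := maxn N1 N2.
pose g1 n := if (n < N1)%N then h1 n else 0.
pose g2 n := if (n < N2)%N then h2 n else 0.
have hg : forall n, (n < N)%N -> g1 n - g2 n = 0.
  apply: (Hind (N := N) (h := fun n => g1 n - g2 n)).
    by move=> n; rewrite /g1 /g2; apply: HD; [apply: Hif | apply: HN; apply: Hif].
  by rewrite sumrB /g1 /g2 pad ?leq_maxl // pad ?leq_maxr // E subrr.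
rewrite -(pad h1 (leq_maxl N1 N2)) big1 // => i _.
have := hg i (ltn_ord i); rewrite /g1 /g2.
case: (classic (X i)) => hX.
  rewrite Z2; last by move=> hn; apply: hn.
  by rewrite if_same subr0.
by rewrite Z1 // if_same.
Qed.

Definition Qd (a : R) := exists N, forall n, (N <= n)%N -> forall h, H n h -> h * a = 0.

Lemma Qd_sub : submodule (Qd : R^o -> Prop).
Proof.
split.
  by exists 0%N => n _ h _; rewrite mulr0.
move=> b u v [N1 hN1] [N2 hN2]; exists (maxn N1 N2) => n hn h Hh.
have hn1 : (N1 <= n)%N by apply: leq_trans hn; apply: leq_maxl.
have hn2 : (N2 <= n)%N by apply: leq_trans hn; apply: leq_maxr.
rewrite /GRing.scale /= mulrDr mulrA (hN1 n hn1 (h * b)); last exact: Hr.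
by rewrite add0r; exact: (hN2 n hn2 h Hh).
Qed.

Lemma strict_mono (g : nat -> nat) : (forall j, (g j < g j.+1)%N) -> forall i j, (i < j)%N -> (g i < g j)%N.
Proof.
move=> hg i j; elim: j => // j IH; rewrite ltnS leq_eqVlt => /orP [/eqP ->|hij] //.
exact: ltn_trans (IH hij) (hg j).
Qed.

Lemma QP_false : False.
Proof.
pose M := quoT Qd_sub.
have Mnz : exists m : M, m <> 0.
  exists (qpiT Qd_sub 1); rewrite qpiT_zero => /qpiT_eq [N hN].
  have [x [Hx xn0]] := Hnz N; apply: xn0.
  by have := hN N (leqnn N) x Hx; rewrite subr0 mulr1.
have [T [[T0 Tc] [[m [Tm mn0]] Ts]]] := hsa Mnz.
have [z Ez] := qpiT_surj m.
have nQz : ~ Qd z.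
  by move=> hQ; apply: mn0; rewrite Ez qpiT_zero; apply/qpiT_eq; rewrite subr0.
pose Z n := exists h, H n h /\ h * z <> 0.
have hZ : forall N, exists n, (N <= n)%N /\ Z n.
  move=> N; apply: NNPP => hn; apply: nQz; exists N => n hNn h Hh.
  apply: NNPP => hz; apply: hn; exists n; split => //; by exists h.
pose gg N := epsilon (inhabits 0%N) (fun n => (N <= n)%N /\ Z n).
have ggP : forall N, (N <= gg N)%N /\ Z (gg N).
  by move=> N; apply: (epsilon_spec (inhabits 0%N) (fun n => (N <= n)%N /\ Z n)); exact: hZ.
pose fs := fix fs j := match j with 0 => gg 0 | j'.+1 => gg (fs j').+1 end.
have fsZ : forall j, Z (fs j) by case => [|j]; [exact: (proj2 (ggP 0%N)) | exact: (proj2 (ggP (fs j).+1))].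
have fsS : forall j, (fs j < fs j.+1)%N by move=> j; exact: (proj1 (ggP (fs j).+1)).
have fsge : forall j, (j <= fs j)%N.
  elim => [|j IH] //; exact: leq_ltn_trans IH (fsS j).
have fsinj : forall i j, fs i = fs j -> i = j.
  move=> i j E; case: (ltngtP i j) => // hij.
    by have := strict_mono fsS hij; rewrite E ltnn.
  by have := strict_mono fsS hij; rewrite E ltnn.
pose X n := exists j, n = fs j.*2.
pose Xc n := ~ X n.
have hXin : forall N, exists n, (N <= n)%N /\ X n /\ Z n.
  move=> N; exists (fs N.*2); split; last by split; [exists N | apply: fsZ].
  by apply: leq_trans (fsge _); rewrite -addnn leq_addr.
have hXout : forall N, exists n, (N <= n)%N /\ Xc n /\ Z n.
  move=> N; exists (fs N.*2.+1); split; last split; last exact: fsZ.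
    apply: leq_trans (fsge _); rewrite -addnn; apply: leq_trans (leqnSn _); exact: leq_addr.
  move=> [j /fsinj E]; have := congr1 odd E; by rewrite /= !odd_double.
pose L x := exists u v, HX X u /\ HX Xc v /\ x = u + v.
have hL : lideal L.
  split; first by exists 0, 0; split; [exact: (proj1 (HX_lideal X)) | split; [exact: (proj1 (HX_lideal Xc)) | rewrite addr0]].
  move=> b x1 x2 [u1 [v1 [hu1 [hv1 ->]]]] [u2 [v2 [hu2 [hv2 ->]]]].
  exists (b * u1 + u2), (b * v1 + v2); split; first exact: (proj2 (HX_lideal X)).
  split; first exact: (proj2 (HX_lideal Xc)).
  by rewrite mulrDr addrACA.
pose P x := fun u => HX X u /\ exists v, HX Xc v /\ x = u + v.
pose phi x := epsilon (inhabits 0) (P x).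
have det : forall x u v, HX X u -> HX Xc v -> x = u + v -> phi x = u.
  move=> x u v hu hv E.
  have [hu' [v' [hv' E']]] : P x (phi x) by apply: epsilon_spec; exists u; split => //; exists v.
  have : u - phi x = 0.
    apply: (HX_disj (X := X)); first by apply: HXD => //; apply: HXN.
    have -> : u - phi x = v' - v.
      have E2 : u + v = phi x + v' by rewrite -E -E'.
      apply/eqP; rewrite subr_eq -(addrK v u) E2.
      by rewrite addrAC addrC -addrA [- v + _]addrC.
    by apply: HXD => //; apply: HXN.
  by move/eqP; rewrite subr_eq0 => /eqP ->.
have hphi : forall b u v, L u -> L v -> phi (b * u + v) = b * phi u + phi v.
  move=> b x1 x2 [u1 [v1 [hu1 [hv1 E1]]]] [u2 [v2 [hu2 [hv2 E2]]]].
  rewrite (det _ _ _ hu1 hv1 E1) (det _ _ _ hu2 hv2 E2).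
  apply: (det _ _ (b * v1 + v2)); first exact: (proj2 (HX_lideal X)).
    exact: (proj2 (HX_lideal Xc)).
  by rewrite E1 E2 mulrDr addrACA.
have [y hy] := baer hinj hL hphi.
have yin : forall n h, X n -> H n h -> h * y = h.
  move=> n h Xn Hh; have hu := HX_single Xn Hh.
  have h0 := proj1 (HX_lideal Xc).
  have Lh : L h by exists h, 0; split => //; split => //; rewrite addr0.
  by rewrite -(hy _ Lh); apply: (det _ _ 0) => //; rewrite addr0.
have yout : forall n h, Xc n -> H n h -> h * y = 0.
  move=> n h Xn Hh; have hv := HX_single (X := Xc) Xn Hh.
  have h0 := proj1 (HX_lideal X).
  have Lh : L h by exists 0, h; split => //; split => //; rewrite add0r.
  by rewrite -(hy _ Lh); apply: (det _ _ h) => //; rewrite add0r.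
pose w := y * z.
have Tw : T (qpiT Qd_sub w).
  have := Tc y m 0 Tm T0; rewrite addr0 Ez qpiT_scale; exact.
have nQw : ~ Qd w.
  move=> [N hN]; have [n [hn [Xn [h [Hh hz]]]]] := hXin N.
  apply: hz; rewrite -(yin n h Xn Hh) -mulrA; exact: (hN n hn h Hh).
pose T' := fun m' : M => exists c, m' = c *: qpiT Qd_sub w.
have sT' : submodule T'.
  split; first by exists 0; rewrite scale0r.
  move=> a u v [c ->] [d ->]; exists (a * c + d); by rewrite scalerA scalerDl.
have subT' : forall m', T' m' -> T m'.
  by move=> m' [c ->]; have := Tc c _ 0 Tw T0; rewrite addr0.
case: (Ts T' sT' subT') => [H0'|H1'].
  apply: nQw; have := H0' (qpiT Qd_sub w) (ex_intro _ 1 (esym (scale1r _))).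
  by rewrite qpiT_zero => /qpiT_eq; rewrite subr0.
have [c Ec] := H1' m Tm.
move: Ec; rewrite Ez qpiT_scale => /qpiT_eq [N hN].
have [n [hn [Xn [h [Hh hz]]]]] := hXout N.
apply: hz; have := hN n hn h Hh.
rewrite /GRing.scale /= mulrBr => /eqP; rewrite subr_eq0 => /eqP ->.
by rewrite /w mulrA mulrA (yout n (h * c)) ?mul0r //; apply: Hr.
Qed.
End QP.


Section FD.
Variables (K : fieldType) (A : algType K) (V : vectType K) (g : A -> V).
Hypothesis hg : forall c x y, g (c *: x + y) = c *: g x + g y.
Hypothesis hgi : forall a, g a = 0 -> a = 0.

Lemma g0 : g 0 = 0.
Proof.
have := hg 1 0 0; rewrite !scale1r addr0 => E.
by apply: (@addrI _ (g 0)); rewrite addr0 -E.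
Qed.
Lemma gD x y : g (x + y) = g x + g y.
Proof. by have := hg 1 x y; rewrite !scale1r. Qed.
Lemma gZ c x : g (c *: x) = c *: g x.
Proof. by have := hg c x 0; rewrite !addr0 g0 addr0. Qed.
Lemma gB x y : g (x - y) = g x - g y.
Proof. by rewrite -scaleN1r gD -scaleN1r gZ. Qed.
Lemma ginj x y : g x = g y -> x = y.
Proof. by move=> E; apply/eqP; rewrite -subr_eq0; apply/eqP; apply: hgi; rewrite gB E subrr. Qed.

Lemma vs_of (P : A -> Prop) : P 0 -> (forall c x y, P x -> P y -> P (c *: x + y)) ->
  exists U : {vspace V}, (forall v, v \in U -> exists a, P a /\ g a = v) /\
                         (forall a, P a -> g a \in U).
Proof.
move=> P0 Pc.
suff : forall m (U : {vspace V}), (\dim {:V} - \dim U <= m)%N ->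
   (forall v, v \in U -> exists a, P a /\ g a = v) ->
   exists U : {vspace V}, (forall v, v \in U -> exists a, P a /\ g a = v) /\
                         (forall a, P a -> g a \in U).
  move=> H; apply: (H _ 0%VS (leqnn _)) => v; rewrite memv0 => /eqP ->.
  by exists 0; split => //; exact: g0.
elim => [|m IH] U hm hU.
  exists U; split => // a Pa; apply: NNPP => hn.
  have := dimvS (subvf (U + <[g a]>)%VS).
  have : (\dim U < \dim (U + <[g a]>))%N.
    rewrite (ltn_leqif (dimv_leqif_sup (addvSl U <[g a]>))); apply/negP => /subvP h; apply: hn.
    rewrite -[g a]add0r; apply: h.
    by apply: memv_add; [exact: mem0v | exact: memv_line].
  lia.
case: (classic (forall a, P a -> g a \in U)) => [hall|].
  by exists U.
move=> /existsNP [a /not_implyP [Pa hn]].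
have hn' : g a \notin U by apply/negP.
apply: (IH (U + <[g a]>)%VS).
  have := dimvS (subvf (U + <[g a]>)%VS).
  have : (\dim U < \dim (U + <[g a]>))%N.
    rewrite (ltn_leqif (dimv_leqif_sup (addvSl U <[g a]>))); apply/negP => /subvP h; move/negP: hn'; apply.
    rewrite -[g a]add0r; apply: h.
    by apply: memv_add; [exact: mem0v | exact: memv_line].
  lia.
move=> v /memv_addP [u hu [w /vlineP [c ->] ->]].
have [b [Pb <-]] := hU u hu.
exists (c *: a + b); split; first exact: Pc.
by rewrite hg addrC.
Qed.

Lemma gsum (I : Type) (r : seq I) (F : I -> A) : g (\sum_(i <- r) F i) = \sum_(i <- r) g (F i).
Proof. by apply: (big_morph g gD g0). Qed.

Lemma fd : finite_dimensional A.
Proof.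
have [U [hU1 hU2]] := @vs_of (fun _ => True) I (fun _ _ _ _ _ => I).
pose b := vbasis U.
pose pre j := epsilon (inhabits 0) (fun a => g a = b`_j).
have preP : forall j, (j < \dim U)%N -> g (pre j) = b`_j.
  move=> j hj; rewrite /pre; apply: (epsilon_spec (inhabits 0) (fun a => g a = b`_j)).
  have : b`_j \in U.
    apply: (vbasis_mem (U := U)); apply: mem_nth; by rewrite size_tuple.
  by move/hU1 => [a [_ ha]]; exists a.
exists (mkseq pre (\dim U)) => v.
exists (fun i => nth 0 [seq coord b j (g v) | j <- enum 'I_(\dim U)] i).
apply: ginj; rewrite gsum size_mkseq.
rewrite {1}(coord_vbasis (hU2 v I)); apply: eq_bigr => i _.
by rewrite gZ nth_mkseq // preP // (nth_map i) ?size_enum_ord // nth_ord_enum.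
Qed.

Lemma dec_const (d : nat -> nat) : (forall n, (d n.+1 <= d n)%N) ->
  exists N, forall n, (N <= n)%N -> d n = d N.
Proof.
move=> hd.
suff : forall v (d : nat -> nat), (forall n, (d n.+1 <= d n)%N) -> (d 0 <= v)%N ->
  exists N, forall n, (N <= n)%N -> d n = d N.
  by move=> H; exact: (H _ d hd (leqnn _)).
move=> v; elim: v => [|v IH] {}d {}hd hv.
  have h0 : forall n, (d n <= d 0)%N.
    by elim => // n IHn; apply: leq_trans (hd n) IHn.
  exists 0%N => n _; apply/eqP; rewrite eqn_leq h0 /=; move: hv; rewrite leqn0 => /eqP ->; by [].
have h0 : forall n, (d n <= d 0)%N.
  by elim => // n IHn; apply: leq_trans (hd n) IHn.
case: (classic (forall n, d n = d 0)) => [hall|].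
  by exists 0%N => n _; apply: hall.
move=> /existsNP [n0 hn0].
have lt : (d n0 < d 0)%N by rewrite ltn_neqAle h0 andbT; apply/eqP.
have [N' hN'] := IH (fun j => d (n0 + j)%N) (fun j => ltac:(rewrite /= addnS; apply: hd)) (ltac:(rewrite /= addn0; lia)).
exists (n0 + N')%N => n hn.
have -> : n = (n0 + (n - n0))%N by lia.
apply: hN'; lia.
Qed.

Lemma artin (Ii : nat -> A -> Prop) : (forall n, left_ideal (Ii n)) ->
  (forall n x, Ii n.+1 x -> Ii n x) ->
  exists N, forall n, (N <= n)%N -> forall x, Ii n x <-> Ii N x.
Proof.
move=> hI hdec.
have hsub : forall n, Ii n 0 /\ (forall c x y, Ii n x -> Ii n y -> Ii n (c *: x + y)).
  move=> n; have [h0 hc] := hI n; split => // c x y hx hy.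
  by rewrite -mulr_algl; exact: (hc (c%:A) x y hx hy).
have Uf : forall n, {U : {vspace V} | (forall v, v \in U -> exists a, Ii n a /\ g a = v) /\
                         (forall a, Ii n a -> g a \in U)}.
  move=> n; apply: constructive_indefinite_description.
  exact: vs_of (proj1 (hsub n)) (proj2 (hsub n)).
pose Un n := sval (Uf n).
have hU1 : forall n v, v \in Un n -> exists a, Ii n a /\ g a = v by move=> n; exact: (proj1 (svalP (Uf n))).
have hU2 : forall n a, Ii n a -> g a \in Un n by move=> n; exact: (proj2 (svalP (Uf n))).
have hUdec : forall n, (Un n.+1 <= Un n)%VS.
  move=> n; apply/subvP => v /hU1 [a [ha <-]]; apply: hU2; exact: hdec.
have hIdec : forall N n, (N <= n)%N -> forall x, Ii n x -> Ii N x.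
  move=> N n; elim: n => [|n IH]; first by rewrite leqn0 => /eqP ->.
  rewrite leq_eqVlt => /orP [/eqP ->|] // hlt x hx; apply: IH => //; exact: hdec.
have hUdec' : forall N n, (N <= n)%N -> (Un n <= Un N)%VS.
  move=> N n; elim: n => [|n IH]; first by rewrite leqn0 => /eqP ->.
  rewrite leq_eqVlt => /orP [/eqP ->|] // hlt; apply: subv_trans (hUdec n) (IH hlt).
have [N hN] := dec_const (d := fun n => \dim (Un n)) (fun n => dimvS (hUdec n)).
exists N => n hn x; split; first exact: hIdec.
move=> hx; have : Un n == Un N.
  by rewrite eqEdim (hUdec' N n hn) /=; have := hN n hn; rewrite /= => ->.
move/eqP => E; have := hU2 N x hx; rewrite -E => /hU1 [a [ha /ginj <-]] //.
Qed.
End FD.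


Unset Implicit Arguments.
Section Main.
Variables (K : fieldType) (A : algType K).
Variables (I : Type) (le : I -> I -> Prop) (B : I -> falgType K)
  (f : forall i j, le i j -> B j -> B i) (p : forall i, A -> B i).
Hypothesis hrefl : forall i, le i i.
Hypothesis htrans : forall i j k, le i j -> le j k -> le i k.
Hypothesis hdir : forall i j, exists k, le i k /\ le j k.
Hypothesis hfm : forall i j (h : le i j), alg_morph (f i j h).
Hypothesis hpm : forall i, alg_morph (p i).
Hypothesis hpc : forall i j (h : le i j) (a : A), f i j h (p j a) = p i a.
Hypothesis hsep : forall a : A, (forall i, p i a = 0) -> a = 0.
Hypothesis hinj : left_selfinjective A.
Hypothesis hsa : left_semiartinian A.

Lemma am0 (U V : lalgType K) (g : U -> V) : alg_morph g -> g 0 = 0.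
Proof.
case=> hl _; have := hl 1 0 0; rewrite !scale1r addr0 => E.
by apply: (@addrI _ (g 0)); rewrite addr0 -E.
Qed.
Lemma amD (U V : lalgType K) (g : U -> V) : alg_morph g -> forall x y, g (x + y) = g x + g y.
Proof. by case=> hl _ x y; have := hl 1 x y; rewrite !scale1r. Qed.
Lemma amN (U V : lalgType K) (g : U -> V) : alg_morph g -> forall x, g (- x) = - g x.
Proof.
move=> hg x; apply: (@addrI _ (g x)); rewrite -amD // !subrr; exact: am0.
Qed.
Lemma amZ (U V : lalgType K) (g : U -> V) : alg_morph g -> forall c x, g (c *: x) = c *: g x.
Proof. by move=> hg c x; have := (proj1 hg) c x 0; rewrite !addr0 am0 // addr0. Qed.
Lemma amM (U V : lalgType K) (g : U -> V) : alg_morph g -> forall x y, g (x * y) = g x * g y.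
Proof. by case=> _ []. Qed.

Definition J i (a : A) := p i a = 0.

Lemma J0 i : J i 0. Proof. exact: am0. Qed.
Lemma JD i x y : J i x -> J i y -> J i (x + y).
Proof. by rewrite /J amD // => -> ->; rewrite addr0. Qed.
Lemma JN i x : J i x -> J i (- x).
Proof. by rewrite /J amN // => ->; rewrite oppr0. Qed.
Lemma JML i a x : J i x -> J i (a * x).
Proof. by rewrite /J amM // => ->; rewrite mulr0. Qed.
Lemma JMR i a x : J i x -> J i (x * a).
Proof. by rewrite /J amM // => ->; rewrite mul0r. Qed.
Lemma Jlideal i : lideal (J i).
Proof. by split; [exact: J0 | move=> a u v hu hv; apply: JD => //; apply: JML]. Qed.
Lemma Jmono i j : le i j -> forall x, J j x -> J i x.
Proof. by move=> h x; rewrite /J -(hpc i j h) => ->; apply: am0. Qed.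
Lemma Jsum i (T : Type) (r : seq T) (F : T -> A) : (forall t, J i (F t)) -> J i (\sum_(t <- r) F t).
Proof. move=> hF; elim/big_ind: _ => //; [exact: J0 | exact: JD]. Qed.

Lemma Jsum_cond i (T : Type) (r : seq T) (P : pred T) (F : T -> A) :
  (forall t, P t -> J i (F t)) -> J i (\sum_(t <- r | P t) F t).
Proof. move=> hF; elim/big_rec: _ => [|t x Pt Jx]; [exact: J0 | exact: JD (hF t Pt) Jx]. Qed.

Lemma step k0 : (exists a, J k0 a /\ a <> 0) ->
  exists (Hs : A -> Prop) (k' : I), le k0 k' /\ lideal Hs /\
    (forall b x, Hs x -> Hs (x * b)) /\ (exists x, Hs x /\ x <> 0) /\
    (forall x, Hs x -> J k0 x) /\ (forall x, Hs x -> J k' x -> x = 0).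
Proof.
move=> hne.
have [S [hS SJ]] := semiart_simple hsa (Jlideal k0) hne.
have [s0 [Ss0 s0n]] := proj1 (proj2 hS).
have [i pi0] : exists i, p i s0 <> 0.
  apply: NNPP => hn; apply: s0n; apply: hsep => i; apply: NNPP => hi; apply: hn; by exists i.
have SJi : forall s, S s -> J i s -> s = 0.
  have hT : lideal (fun s => S s /\ J i s).
    split; first by split; [exact: (S0 hS) | exact: J0].
    move=> b u v [hu1 hu2] [hv1 hv2]; split; first exact: (Sc hS).
    by apply: JD => //; apply: JML.
  case: (proj2 (proj2 hS) _ hT (fun x hx => proj1 hx)) => [H0'|H1'].
    by move=> s hs hj; apply: H0'.
  by exfalso; apply: pi0; exact: (proj2 (H1' _ Ss0)).
have [k' [h1 h2]] := hdir k0 i.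
exists (SAid S), k'; split => //.
split.
  split; first by exists [::]; split => //; rewrite big_nil.
  move=> b u v [l1 [hl1 ->]] [l2 [hl2 ->]].
  exists (map (fun q => (b * q.1, q.2)) l1 ++ l2); split.
    move=> q hq; case: (List.in_app_or _ _ _ hq) => [hq1|hq2].
      have [q' [<- hq']] := proj1 (List.in_map_iff _ _ _) hq1.
      by rewrite /=; apply: (SM hS); apply: hl1.
    exact: hl2.
  by rewrite big_cat big_map /= mulr_sumr; congr (_ + _); apply: eq_bigr => q _; rewrite mulrA.
split.
  move=> b x [l [hl ->]]; exists (map (fun q => (q.1, q.2 * b)) l); split.
    move=> q hq; have [q' [<- hq']] := proj1 (List.in_map_iff _ _ _) hq.
    by rewrite /=; apply: hl.
  by rewrite big_map mulr_suml; apply: eq_bigr => q _ /=; rewrite mulrA.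
split.
  exists s0; split => //; exists [:: (s0, 1)]; split.
    by move=> q [<-|[]].
  by rewrite big_cons big_nil /= mulr1 addr0.
split.
  move=> x [l [hl ->]]; elim: l hl => [|q l IH] hl; first by rewrite big_nil; exact: J0.
  rewrite big_cons; apply: JD; last by apply: IH => q' hq'; apply: hl; right.
  by apply: JMR; apply: SJ; apply: hl; left.
move=> x hx hJ; apply: (@SA_disjoint _ S hS (J k')) => //.
- by move=> b y; apply: JML.
- by move=> b y; apply: JMR.
- by move=> s hs hj; apply: SJi => //; apply: (Jmono i k' h2).
Qed.

Lemma case2 : inhabited I -> (forall k, exists a, J k a /\ a <> 0) -> False.
Proof.
move=> [i0] hall.
have stepf : forall k0, { q : (A -> Prop) * I | le k0 q.2 /\ lideal q.1 /\
    (forall b x, q.1 x -> q.1 (x * b)) /\ (exists x, q.1 x /\ x <> 0) /\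
    (forall x, q.1 x -> J k0 x) /\ (forall x, q.1 x -> J q.2 x -> x = 0) }.
  move=> k0; apply: constructive_indefinite_description.
  have [Hs [k' hh]] := step k0 (hall k0); by exists (Hs, k').
pose kk := fix kk n := match n with 0 => i0 | n'.+1 => (sval (stepf (kk n'))).2 end.
pose Hn n := (sval (stepf (kk n))).1.
have hkk : forall n, le (kk n) (kk n.+1) by move=> n; exact: (proj1 (svalP (stepf (kk n)))).
have hHl : forall n, lideal (Hn n) by move=> n; exact: (proj1 (proj2 (svalP (stepf (kk n))))).
have hHr : forall n b x, Hn n x -> Hn n (x * b) by move=> n; exact: (proj1 (proj2 (proj2 (svalP (stepf (kk n)))))).
have hHnz : forall n, exists x, Hn n x /\ x <> 0 by move=> n; exact: (proj1 (proj2 (proj2 (proj2 (svalP (stepf (kk n))))))).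
have hHJ : forall n x, Hn n x -> J (kk n) x by move=> n; exact: (proj1 (proj2 (proj2 (proj2 (proj2 (svalP (stepf (kk n)))))))).
have hHd : forall n x, Hn n x -> J (kk n.+1) x -> x = 0 by move=> n; exact: (proj2 (proj2 (proj2 (proj2 (proj2 (svalP (stepf (kk n)))))))).
have chain : forall m n, (m <= n)%N -> le (kk m) (kk n).
  move=> m n; elim: n => [|n IH]; first by rewrite leqn0 => /eqP ->.
  rewrite leq_eqVlt => /orP [/eqP ->|]; first exact: hrefl.
  by rewrite ltnS => /IH hmn; apply: htrans hmn (hkk n).
apply: (QP_false hinj hsa hHl hHr hHnz).
move=> N h hh hsum.
suff : forall m, (m <= N)%N -> forall n, (n < m)%N -> h n = 0.
  by move=> H'; apply: H'.
elim => [|m IH] hm n; first by [].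
have IH' := IH (ltnW hm).
rewrite ltnS leq_eqVlt => /orP [/eqP ->|]; last exact: IH'.
have hm' : (m < N)%N by [].
move: hsum; rewrite -(big_mkord xpredT h) (big_cat_nat (leq0n m) (ltnW hm')) /=.
rewrite big_nat_cond big1; last by move=> j /andP [/andP [_ hj] _]; apply: IH'.
rewrite add0r big_ltn // => E.
have Jm : J (kk m.+1) (h m).
  have -> : h m = - \sum_(m.+1 <= i < N) h i.
    by apply/eqP; rewrite -addr_eq0 E.
  apply: JN; rewrite big_nat_cond; apply: Jsum_cond => j /andP [/andP [hj _] _].
  by apply: (Jmono _ _ (chain _ _ hj)); apply: hHJ.
by apply: hHd => //; apply: hh.
Qed.
End Main.

Set Implicit Arguments.
Theorem theorem5p2 (K : fieldType) (A : algType K) :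
  profinite_algebra A -> left_semiartinian A -> left_selfinjective A ->
  finite_dimensional A /\ quasi_Frobenius A.
Proof.
move=> [I [le [B [f [p [hinh [[hrefl htrans] [hdir [hfm [hff [hcomp [hpm [hpc [hsep hcompl]]]]]]]]]]]]]] hsa hinj.
case: (classic (exists k, forall a, p k a = 0 -> a = 0)) => [[k hk]|hno].
  have hg : forall c x y, p k (c *: x + y) = c *: p k x + p k y := proj1 (hpm k).
  split; first exact: (fd hg hk).
  split => //; move=> Ii hI hdec; exact: (artin hg hk hI hdec).
exfalso.
apply: (@case2 K A I le B f p hrefl htrans hdir hfm hpm hpc hsep hinj hsa hinh).
move=> k; apply: NNPP => hn; apply: hno; exists k => a ha; apply: NNPP => an0.
by apply: hn; exists a.
Qed.
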